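(* Consider a batch contextual bandit with finite context space $\mathcal{S}$, finite action space $\mathcal{A}$, context distribution $d_0$, reward distributions $R(s,a)\in\Delta([0,R_{\max}])$, behavior policy $\pi_b$, $\mu:=d_0\times\pi_b$, and a finite class $\mathcal{F}$ of functions $\mathcal{S}\times\mathcal{A}\to[0,R_{\max}]$. Let $\hat f\in\mathcal{F}$ satisfy $\mathcal{L}_\mu(\hat f)-\min_{f\in\mathcal{F}}\mathcal{L}_\mu(f)\le\epsilon$. Assume: (a) there is $C<+\infty$ such that for all $f,f'\in\mathcal{F}$ and every admissible $\nu$, $\|f-f'\|_\nu^2\le C\,\|f-f'\|_\mu^2$; (b) there exists a valid reward function $f^\star\in\mathcal{F}$, i.e. $f^\star$ satisfies $\mathbb{E}_{(s,a)\sim\nu}[f^\star(s,a)]=\mathbb{E}_{(s,a)\sim\nu,\,r\sim R(s,a)}[r]$ for every admissible $\nu$, and $\mathcal{L}_\mu(f')-\mathcal{L}_\mu(f^\star)=\|f'-f^\star\|_\mu^2$ for every $f'\in\mathcal{F}$. Then for any valid reward function $f^\star$ (in the sense of (b)), $$v^{\pi_{\hat f}}\ \ge\ v^{\pi_{f^\star}}-2\sqrt{C\epsilon}.$$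
   Context: Data: $s\sim d_0$, $a\sim\pi_b(\cdot\mid s)$, $r\sim R(s,a)$; $\mu$ is the joint law of $(s,a)$. $\mathcal{L}_\mu(f):=\mathbb{E}_{(s,a)\sim\mu,\,r\sim R(s,a)}[(f(s,a)-r)^2]$. $\|g\|_\nu^2:=\mathbb{E}_{(s,a)\sim\nu}[g(s,a)^2]$. $\pi_f$ is the greedy policy $s\mapsto\arg\max_af(s,a)$ (fixed tie-breaking). The admissible distributions are the distributions $d_0\times\pi_f$ (i.e. $s\sim d_0$, $a=\pi_f(s)$) for $f\in\mathcal{F}$. $v^\pi:=\mathbb{E}_{s\sim d_0,\,r\sim R(s,\pi(s))}[r]$. *)

(* Defs.v *)
From HB Require Import structures.
From mathcomp Require Import all_boot all_order all_algebra.
From mathcomp Require Import all_classical all_reals all_analysis.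
Set Implicit Arguments. Unset Strict Implicit. Unset Printing Implicit Defensive.
Import Order.TTheory GRing.Theory Num.Theory.
Local Open Scope classical_set_scope.
Local Open Scope ring_scope.

Section Bandit.
Variables (R : realType) (S A : finType).
Definition is_distr (p : S -> R) := (forall s, 0 <= p s) /\ \sum_s p s = 1.
Definition is_policy (pib : S -> A -> R) :=
  forall s, (forall a, 0 <= pib s a) /\ \sum_a pib s a = 1.

Variable (Rw : S -> A -> probability R R).

Definition mean_reward (s : S) (a : A) : R := Rintegral (Rw s a) setT (fun r => r).

Definition loss (d0 : S -> R) (pib : S -> A -> R) (f : S -> A -> R) : R :=
  \sum_s \sum_a d0 s * pib s a * Rintegral (Rw s a) setT (fun r => (f s a - r) ^+ 2).

Definition sqnorm_mu (d0 : S -> R) (pib : S -> A -> R) (g : S -> A -> R) : R :=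
  \sum_s \sum_a d0 s * pib s a * (g s a) ^+ 2.

Definition sqnorm_det (d0 : S -> R) (pi : S -> A) (g : S -> A -> R) : R :=
  \sum_s d0 s * (g s (pi s)) ^+ 2.

Definition expect_det (d0 : S -> R) (pi : S -> A) (g : S -> A -> R) : R :=
  \sum_s d0 s * g s (pi s).

Definition value (d0 : S -> R) (pi : S -> A) : R := expect_det d0 pi mean_reward.

(* sel f is a greedy policy for f: sel f s in argmax_a f(s,a) (the selector
   fixes a deterministic tie-breaking rule) *)
Definition greedy_selector (sel : (S -> A -> R) -> S -> A) :=
  forall (f : S -> A -> R) (s : S) (a : A), f s a <= f s (sel f s).

Definition valid_reward (d0 : S -> R) (pib : S -> A -> R)
    (sel : (S -> A -> R) -> S -> A) (F : set (S -> A -> R)) (fs : S -> A -> R) :=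
  (forall g, F g -> expect_det d0 (sel g) fs = expect_det d0 (sel g) mean_reward) /\
  (forall f', F f' -> loss d0 pib f' - loss d0 pib fs = sqnorm_mu d0 pib (f' \- fs)).
End Bandit.

(* Main.v *)
Require Import Defs.
From HB Require Import structures.
From mathcomp Require Import all_boot all_order all_algebra.
From mathcomp Require Import all_classical all_reals all_analysis.
From mathcomp Require Import ring lra.
Import Order.TTheory GRing.Theory Num.Theory.
Local Open Scope classical_set_scope.
Local Open Scope ring_scope.

Lemma jensen_fin (R : realType) (S : finType) (d h : S -> R) :
  (forall s, 0 <= d s) -> \sum_s d s = 1 ->
  \sum_s d s * h s <= Num.sqrt (\sum_s d s * h s ^+ 2).
Proof.
move=> d0 d1.
set E := \sum_s d s * h s.
have H0 : 0 <= \sum_s d s * (h s - E) ^+ 2.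
  by apply: sumr_ge0 => s _; apply: mulr_ge0 => //; apply: sqr_ge0.
have Hexp : \sum_s d s * (h s - E) ^+ 2 =
    \sum_s d s * h s ^+ 2 - (2 * E) * E + E ^+ 2 * \sum_s d s.
  rewrite (eq_bigr (fun s => (d s * h s ^+ 2 - (2 * E) * (d s * h s)) + E ^+ 2 * d s)); last by move=> s _; ring.
  by rewrite big_split /= sumrB -!mulr_sumr.
rewrite Hexp d1 in H0.
have H1 : E ^+ 2 <= \sum_s d s * h s ^+ 2 by lra.
apply: (le_trans (ler_norm E)).
rewrite -sqrtr_sqr.
exact: ler_wsqrtr.
Qed.

Lemma key_bound (R : realType) (C e m n : R) :
  0 <= m -> m <= e -> n <= C * m -> 0 <= n -> Num.sqrt n <= Num.sqrt (C * e).
Proof.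
move=> m0 me nC n0.
case: (leP 0 C) => HC.
  apply: ler_wsqrtr; apply: (le_trans nC); exact: ler_wpM2l.
have -> : n = 0 by apply/eqP; rewrite eq_le n0 andbT; nra.
by rewrite sqrtr0 sqrtr_ge0.
Qed.

Theorem theorem3 (R : realType) (S A : finType) (Rmax : R)
  (d0 : S -> R) (pib : S -> A -> R) (Rw : S -> A -> probability R R)
  (F : set (S -> A -> R)) (sel : (S -> A -> R) -> S -> A)
  (fhat : S -> A -> R) (eps : R) :
  0 <= Rmax ->
  is_distr d0 -> is_policy pib ->
  (forall s a, Rw s a `[0, Rmax]%classic = 1%E) ->
  finite_set F ->
  (forall f, F f -> forall s a, 0 <= f s a <= Rmax) ->
  greedy_selector sel ->
  F fhat ->
  (forall f, F f -> loss Rw d0 pib fhat - loss Rw d0 pib f <= eps) ->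
  forall C : R, (forall f f' g, F f -> F f' -> F g ->
      sqnorm_det d0 (sel g) (f \- f') <= C * sqnorm_mu d0 pib (f \- f')) ->
  forall fstar, F fstar -> valid_reward Rw d0 pib sel F fstar ->
  value Rw d0 (sel fhat) >= value Rw d0 (sel fstar) - 2 * Num.sqrt (C * eps).
Proof.
move=> _ [d0ge d0sum] pibP _ _ _ gr Fh Heps C HC fs Ffs [V1 V2].
have mu_ge0 : forall g : S -> A -> R, 0 <= sqnorm_mu d0 pib g.
  move=> g; rewrite /sqnorm_mu; apply: sumr_ge0 => s _; apply: sumr_ge0 => a _.
  apply: mulr_ge0; last exact: sqr_ge0.
  apply: mulr_ge0 => //; exact: (pibP s).1.
have det_ge0 : forall (pi : S -> A) (g : S -> A -> R), 0 <= sqnorm_det d0 pi g.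
  move=> pi g; rewrite /sqnorm_det; apply: sumr_ge0 => s _; apply: mulr_ge0 => //; exact: sqr_ge0.
have m1 : sqnorm_mu d0 pib (fhat \- fs) <= eps.
  by rewrite -V2 //; apply: Heps.
have m2 : sqnorm_mu d0 pib (fs \- fhat) <= eps.
  rewrite (_ : sqnorm_mu d0 pib (fs \- fhat) = sqnorm_mu d0 pib (fhat \- fs)) //.
  apply: eq_bigr => s _; apply: eq_bigr => a _ /=; congr (_ * _).
  by rewrite -sqrrN opprB.
have T1 : \sum_s d0 s * (fs \- fhat) s (sel fs s) <= Num.sqrt (C * eps).
  have J := @jensen_fin _ _ _ (fun s => (fs \- fhat) s (sel fs s)) d0ge d0sum.
  
  apply: (le_trans J).
  apply: (@key_bound _ _ _ (sqnorm_mu d0 pib (fs \- fhat))) => //.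
    exact: HC.
  exact: det_ge0.
have T2 : \sum_s d0 s * (fhat \- fs) s (sel fhat s) <= Num.sqrt (C * eps).
  apply: (le_trans (@jensen_fin _ _ _ (fun s => (fhat \- fs) s (sel fhat s)) d0ge d0sum)).
  apply: (@key_bound _ _ _ (sqnorm_mu d0 pib (fhat \- fs))) => //.
    exact: HC.
  exact: det_ge0.
have Hv1 : value Rw d0 (sel fhat) = \sum_s d0 s * fs s (sel fhat s).
  by rewrite /value -V1.
have Hv2 : value Rw d0 (sel fs) = \sum_s d0 s * fs s (sel fs s).
  by rewrite /value -V1.
rewrite Hv1 Hv2.
have Hpt : \sum_s d0 s * fs s (sel fs s) - \sum_s d0 s * fs s (sel fhat s)
   <= \sum_s d0 s * (fs \- fhat) s (sel fs s)
      + \sum_s d0 s * (fhat \- fs) s (sel fhat s).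
  rewrite -sumrB -big_split /=; apply: ler_sum => s _.
  have := gr fhat s (sel fs s); have := d0ge s => ds hg.
  rewrite -subr_ge0.
  have -> : d0 s * (fs s (sel fs s) - fhat s (sel fs s)) +
      d0 s * (fhat s (sel fhat s) - fs s (sel fhat s)) -
      (d0 s * fs s (sel fs s) - d0 s * fs s (sel fhat s))
      = d0 s * (fhat s (sel fhat s) - fhat s (sel fs s)) by ring.
  by apply: mulr_ge0 => //; rewrite subr_ge0.
move: Hpt T1 T2.
set a := \sum_s _ * (fs \- fhat) _ _.
set b := \sum_s _ * (fhat \- fs) _ _.
set v1 := \sum_s _ * fs s (sel fhat s).
set v2 := \sum_s _ * fs s (sel fs s).
set q := Num.sqrt _.
move=> H1 H2 H3.
clearbody a b v1 v2 q.
lra.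
Qed.
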